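(* Let $n\ge 2$ and let $K\subset\mathbb{R}^n$ be bounded and not contained in any $1$-dimensional linear subspace. Then (i) $K\in\mathcal{C}_e^n$ if and only if $K=\mathrm{cyl}(K)$; and (ii) $K^{\diamond\diamond}=\mathrm{cyl}(K)$.
   Context: For $x,y\in\mathbb{R}^n$ let $[x,y]=\sqrt{|x|^2|y|^2-(x\cdot y)^2}$. The sine polar body of $K$ is $K^{\diamond}=\{x\in\mathbb{R}^n:[x,y]\le1\text{ for all }y\in K\}$ and $K^{\diamond\diamond}=(K^{\diamond})^{\diamond}$. A closed solid cylinder is a set $C^{-}(u,r)=\{x\in\mathbb{R}^n:[x,u]\le r\}$ with $u\in S^{n-1}$, $r>0$. $\mathcal{C}_e^n$ is the class of origin-symmetric convex bodies in $\mathbb{R}^n$ that are intersections of closed solid cylinders. For a bounded set $E$ not contained in any $1$-dimensional subspace, its cylindrical hull $\mathrm{cyl}(E)$ is the intersection of all closed solid cylinders $C^{-}(u,r)$ containing $E$. *)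

(* Defs.v *)
From HB Require Import structures.
From mathcomp Require Import all_boot all_order all_algebra.
From mathcomp Require Import all_classical all_reals all_analysis.
Set Implicit Arguments. Unset Strict Implicit. Unset Printing Implicit Defensive.
Import Order.TTheory GRing.Theory Num.Theory.
Import numFieldNormedType.Exports.
Local Open Scope classical_set_scope.
Local Open Scope ring_scope.

Section SinePolar.
Variables (R : realType) (n : nat).
Implicit Types (x y u : 'rV[R]_n) (K E : set 'rV[R]_n).

Definition dotv x y : R := \sum_(i < n) x ord0 i * y ord0 i.
Definition sqnorm x : R := dotv x x.

Definition sinbr x y : R := Num.sqrt (sqnorm x * sqnorm y - (dotv x y) ^+ 2).

Definition sine_polar K : set 'rV[R]_n := [set x | forall y, K y -> sinbr x y <= 1].

Definition cylinder u (r : R) : set 'rV[R]_n := [set x | sinbr x u <= r].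

Definition is_cylinder (C : set 'rV[R]_n) : Prop :=
  exists u (r : R), sqnorm u = 1 /\ 0 < r /\ C = cylinder u r.

Definition convex_set_rv K : Prop :=
  forall x y (t : R), K x -> K y -> 0 <= t <= 1 -> K (t *: x + (1 - t) *: y).

Definition convex_body K : Prop :=
  compact K /\ convex_set_rv K /\ (K° !=set0).

Definition origin_symmetric K : Prop := forall x, K x -> K (- x).

Definition cyl_intersection K : Prop :=
  exists F : set (set 'rV[R]_n), (forall C, F C -> is_cylinder C) /\
    K = \bigcap_(C in F) C.

Definition Cen K : Prop := convex_body K /\ origin_symmetric K /\ cyl_intersection K.

Definition cyl E : set 'rV[R]_n :=
  [set x | forall u (r : R), sqnorm u = 1 -> 0 < r -> E `<=` cylinder u r ->
     cylinder u r x].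

Definition bounded_eucl E : Prop := exists M : R, forall x, E x -> sqnorm x <= M.

Definition in_line E : Prop :=
  exists v, v != 0 /\ forall x, E x -> exists t : R, x = t *: v.

End SinePolar.

(* Main.v *)
Require Import Defs.
From HB Require Import structures.
From mathcomp Require Import all_boot all_order all_algebra.
From mathcomp Require Import all_classical all_reals all_analysis.
From mathcomp Require Import lra ring.
Import Order.TTheory GRing.Theory Num.Theory.
Import numFieldNormedType.Exports.
Local Open Scope classical_set_scope.
Local Open Scope ring_scope.

Section Alg.
Context {R : realType} {n : nat}.
Implicit Types (x y z u : 'rV[R]_n).

Lemma dotvC x y : dotv x y = dotv y x.
Proof. by apply: eq_bigr => i _; rewrite mulrC. Qed.
Lemma dotvDl x y z : dotv (x + y) z = dotv x z + dotv y z.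
Proof. by rewrite /dotv -big_split; apply: eq_bigr => i _; rewrite mxE mulrDl. Qed.
Lemma dotvZl (a : R) x y : dotv (a *: x) y = a * dotv x y.
Proof. by rewrite /dotv mulr_sumr; apply: eq_bigr => i _; rewrite mxE mulrA. Qed.
Lemma dotvNl x y : dotv (- x) y = - dotv x y.
Proof. by rewrite -scaleN1r dotvZl mulN1r. Qed.
Lemma dotvDr x y z : dotv z (x + y) = dotv z x + dotv z y.
Proof. by rewrite dotvC dotvDl !(dotvC z). Qed.
Lemma dotvZr (a : R) x y : dotv y (a *: x) = a * dotv y x.
Proof. by rewrite dotvC dotvZl dotvC. Qed.
Lemma dotvNr x y : dotv y (- x) = - dotv y x.
Proof. by rewrite dotvC dotvNl dotvC. Qed.
Lemma dotv0r x : dotv x 0 = 0.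
Proof. by rewrite -(scale0r (0 : 'rV[R]_n)) dotvZr mul0r. Qed.

Lemma sqnorm_ge0 x : 0 <= sqnorm x.
Proof. by apply: sumr_ge0 => i _; rewrite -expr2 sqr_ge0. Qed.

Lemma sqnorm_eq0 x : sqnorm x = 0 -> x = 0.
Proof.
move=> /eqP; rewrite /sqnorm /dotv psumr_eq0; last by move=> i _; rewrite -expr2 sqr_ge0.
move=> /allP H; apply/rowP => i; rewrite mxE.
have := H i (mem_index_enum _); rewrite /= mulf_eq0 orbb => /eqP ->.
by [].
Qed.

Lemma sqnorm_gt0 x : x != 0 -> 0 < sqnorm x.
Proof.
move=> x0; rewrite lt_neqAle sqnorm_ge0 andbT eq_sym.
by apply: contra x0 => /eqP /sqnorm_eq0 ->.
Qed.

Lemma coord_le_sqnorm x i : x ord0 i ^+ 2 <= sqnorm x.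
Proof.
rewrite /sqnorm /dotv (bigD1 i) //= expr2 lerDl.
by apply: sumr_ge0 => j _; rewrite -expr2 sqr_ge0.
Qed.

Definition gq u x := sqnorm x * sqnorm u - dotv x u ^+ 2.

Lemma sinbr_le x u (r : R) : 0 <= r -> (sinbr x u <= r) = (gq u x <= r ^+ 2).
Proof.
move=> r0; rewrite /sinbr -{1}(ger0_norm r0) -sqrtr_sqr ler_sqrt //.
exact: sqr_ge0.
Qed.

Lemma gq_unit u x : sqnorm u = 1 -> gq u x = sqnorm (x - dotv x u *: u).
Proof.
move=> u1; rewrite /gq /sqnorm !dotvDl !dotvDr !dotvNl !dotvNr !dotvZl !dotvZr.
rewrite -/(sqnorm u) u1 (dotvC u x); ring.
Qed.

Lemma gq_ge0 u x : sqnorm u = 1 -> 0 <= gq u x.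
Proof. by move=> u1; rewrite gq_unit // sqnorm_ge0. Qed.

Lemma gq_le u x : sqnorm u = 1 -> gq u x <= sqnorm x.
Proof. by move=> u1; rewrite /gq u1 mulr1 gerBl sqr_ge0. Qed.

Lemma gqN u x : gq u (- x) = gq u x.
Proof. by rewrite /gq /sqnorm dotvNl dotvNr dotvNl opprK sqrrN. Qed.

Lemma sinbrC x y : sinbr x y = sinbr y x.
Proof. by rewrite /sinbr dotvC mulrC. Qed.

Lemma sinbrZr x y (c : R) : sinbr x (c *: y) = `|c| * sinbr x y.
Proof.
rewrite /sinbr /sqnorm !dotvZl !dotvZr.
have -> : dotv x x * (c * (c * dotv y y)) - (c * dotv x y) ^+ 2
  = c ^+ 2 * (dotv x x * dotv y y - dotv x y ^+ 2) by ring.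
by rewrite sqrtrM ?sqr_ge0 // sqrtr_sqr.
Qed.

Lemma sinbr0r x : sinbr x 0 = 0.
Proof. by rewrite -(scale0r (0 : 'rV[R]_n)) sinbrZr normr0 mul0r. Qed.

End Alg.

Section Top.
Context {R : realType} {n : nat}.
Implicit Types (x y z u : 'rV[R]_n).

Lemma cont_sum (I : Type) (s : seq I) (f : I -> 'rV[R]_n -> R) :
  (forall i, continuous (f i)) -> continuous (fun x => \sum_(i <- s) f i x).
Proof.
move=> fc; elim: s => [|a s IH].
  under eq_fun do rewrite big_nil; exact: cst_continuous.
under eq_fun do rewrite big_cons.
by move=> x; apply: continuousD; [exact: fc|exact: IH].
Qed.

Lemma dotv_cont u : continuous (fun x : 'rV[R]_n => dotv x u).
Proof.
apply: cont_sum => i x; apply: continuousM; first exact: coord_continuous.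
exact: cst_continuous.
Qed.

Lemma sqnorm_cont : continuous (fun x : 'rV[R]_n => sqnorm x).
Proof.
apply: cont_sum => i x; apply: continuousM; exact: coord_continuous.
Qed.

Lemma sinbr_cont u : continuous (fun x : 'rV[R]_n => sinbr x u).
Proof.
move=> x.
have H : {for x, continuous (fun x : 'rV[R]_n => sqnorm x * sqnorm u - dotv x u ^+ 2)}.
  apply: continuousD; last first.
    apply: continuousN.
    exact: (@continuousM _ _ (fun x => dotv x u) (fun x => dotv x u) _ (dotv_cont u x) (dotv_cont u x)).
  apply: continuousM; [exact: sqnorm_cont | exact: cst_continuous].
exact: (continuous_comp H (@sqrt_continuous R _)).
Qed.

Lemma cylinder_closed u (r : R) : closed (cylinder u r).
Proof.
have -> : cylinder u r = (fun x => sinbr x u) @^-1` [set y | y <= r] by [].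
by apply: (proj1 (continuous_closedP _) (sinbr_cont u)); exact: closed_le.
Qed.

End Top.

Section Main.
Context {R : realType} {n : nat}.
Implicit Types (x y z u : 'rV[R]_n) (K : set 'rV[R]_n).

Lemma sqnormZ (c : R) x : sqnorm (c *: x) = c ^+ 2 * sqnorm x.
Proof. by rewrite /sqnorm dotvZl dotvZr mulrA expr2. Qed.

Lemma polar2 K : sine_polar (sine_polar K) = cyl K.
Proof.
apply/seteqP; split => z Hz.
- move=> u r u1 r0 Ku; rewrite /cylinder /=.
  have Hx : sine_polar K (r^-1 *: u).
    move=> y Ky; rewrite sinbrC sinbrZr ger0_norm ?invr_ge0 ?(ltW r0) //.
    rewrite ler_pdivrMl // mulr1; exact: Ku.
  have := Hz _ Hx; rewrite sinbrZr ger0_norm ?invr_ge0 ?(ltW r0) //.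
  by rewrite ler_pdivrMl // mulr1.
- move=> x Hx; rewrite /=.
  case: (eqVneq x 0) => [->|x0]; first by rewrite sinbr0r.
  have sx0 : 0 < sqnorm x := sqnorm_gt0 x x0.
  set s := Num.sqrt (sqnorm x).
  have s0 : 0 < s by rewrite sqrtr_gt0.
  set u := s^-1 *: x.
  have u1 : sqnorm u = 1.
    by rewrite sqnormZ exprVn sqr_sqrtr ?ltW // mulVf ?lt0r_neq0.
  have Ku : K `<=` cylinder u s^-1.
    move=> y Ky; rewrite /cylinder /= sinbrZr ger0_norm ?invr_ge0 ?(ltW s0) //.
    rewrite -{2}(mulr1 s^-1) ler_pM2l ?invr_gt0 //.
    by rewrite sinbrC; exact: Hx.
  have si0 : 0 < s^-1 by rewrite invr_gt0.
  have := Hz u s^-1 u1 si0 Ku; rewrite /cylinder /= => H.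
  have -> : x = s *: u by rewrite /u scalerA mulfV ?lt0r_neq0 // scale1r.
  rewrite sinbrZr ger0_norm ?(ltW s0) //.
  by move: H; rewrite -(ler_pM2l s0) mulfV ?lt0r_neq0.
Qed.

Lemma gq_convex u x y (t r : R) : sqnorm u = 1 -> gq u x <= r -> gq u y <= r ->
  0 <= t <= 1 -> gq u (t *: x + (1 - t) *: y) <= r.
Proof.
move=> u1 hx hy /andP[t0 t1].
have N := gq_ge0 u (x - y) u1.
move: hx hy N; rewrite /gq u1 !mulr1 /sqnorm.
rewrite !dotvDl !dotvDr !dotvZl !dotvZr !dotvNl !dotvNr (dotvC y x).
set X := dotv x x; set Y := dotv y y; set W := dotv x y.
set a := dotv x u; set b := dotv y u => hx hy N.
suff H : t ^+ 2 * (X - a ^+ 2) + (1 - t) ^+ 2 * (Y - b ^+ 2) + t * (1 - t) * (2 * (W - a * b)) <= r.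
  by apply: le_trans H; rewrite le_eqVlt; apply/orP; left; apply/eqP; ring.
have hw : 2 * (W - a * b) <= 2 * r by nra.
have e : r = t ^+ 2 * r + (1 - t) ^+ 2 * r + t * (1 - t) * (2 * r) by ring.
rewrite [leRHS]e; apply: lerD; first apply: lerD.
- by apply: ler_wpM2l => //; rewrite sqr_ge0.
- by apply: ler_wpM2l => //; rewrite sqr_ge0.
- by apply: ler_wpM2l => //; rewrite mulr_ge0 // subr_ge0.
Qed.

End Main.

Section Main2.
Context {R : realType} {n : nat}.
Implicit Types (x y z u : 'rV[R]_n) (K : set 'rV[R]_n).

Lemma ball0_coord (e : R) (y : 'rV[R]_n) : ball (0 : 'rV[R]_n) e y -> forall i, `|y ord0 i| < e.
Proof.
move=> [e0 H] i; have := H ord0 i. rewrite /ball /= mxE sub0r normrN. by [].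
Qed.

Lemma cyl_closed K : closed (cyl K).
Proof.
have -> : cyl K = \bigcap_(p in [set p : 'rV[R]_n * R | sqnorm p.1 = 1 /\ 0 < p.2 /\ K `<=` cylinder p.1 p.2]) cylinder p.1 p.2.
  apply/seteqP; split => x Hx.
    by move=> [u r] /= [u1 [r0 Ku]]; exact: Hx.
  by move=> u r u1 r0 Ku; exact: (Hx (u, r) (conj u1 (conj r0 Ku))).
by apply: closed_bigI => p _; exact: cylinder_closed.
Qed.

Lemma cyl_lower K : (0 < n)%N -> ~ in_line K ->
  exists2 m : R, 0 < m & forall u r, sqnorm u = 1 -> 0 < r -> K `<=` cylinder u r -> m <= r ^+ 2.
Proof.
move=> n0 HnL.
have [a [Ka a0]] : exists a, K a /\ a != 0.
  apply: contrapT => H; apply: HnL; exists (const_mx 1); split.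
    apply/eqP => /rowP /(_ (Ordinal n0)); rewrite !mxE; apply/eqP; exact: oner_neq0.
  move=> x Kx; exists 0; rewrite scale0r; apply: contrapT => xn0; apply: H.
  by exists x; split => //; apply/eqP.
have [b [Kb bn]] : exists b, K b /\ ~ exists t : R, b = t *: a.
  apply: contrapT => H; apply: HnL; exists a; split => // x Kx.
  by apply: contrapT => Hx; apply: H; exists x.
set P := sqnorm a; set Q := sqnorm b; set X := dotv a b.
have P0 : 0 < P := sqnorm_gt0 a a0.
have Q0 : 0 <= Q := sqnorm_ge0 b.
have D0 : 0 < P * Q - X ^+ 2.
  set c := P *: b - X *: a.
  have c0 : c != 0.
    apply/eqP => c0; apply: bn; exists (X / P).
    have e : P *: b = X *: a by apply/eqP; rewrite -subr_eq0; apply/eqP.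
    have -> : b = P^-1 *: (P *: b) by rewrite scalerA mulVf ?lt0r_neq0 // scale1r.
    by rewrite e scalerA mulrC.
  have := sqnorm_gt0 c c0.
  have -> : sqnorm c = P * (P * Q - X ^+ 2).
    rewrite /sqnorm /c !dotvDl !dotvDr !dotvNl !dotvNr !dotvZl !dotvZr.
    rewrite -/(sqnorm a) -/(sqnorm b) -/P -/Q (dotvC b a) -/X; ring.
  by rewrite pmulr_rgt0.
set D := P * Q - X ^+ 2.
have L0 : 0 < 2 * (P + Q) + 1 by lra.
exists (Num.min 1 (D / (2 * (P + Q) + 1))).
  by rewrite lt_min ltr01 /= divr_gt0.
move=> u r u1 r0 Ku.
have Ca := Ku a Ka; have Cb := Ku b Kb.
rewrite /cylinder /= sinbr_le ?(ltW r0) // in Ca.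
rewrite /cylinder /= sinbr_le ?(ltW r0) // in Cb.
have Aa := gq_ge0 u a u1; have Bb := gq_ge0 u b u1.
move: Ca Cb Aa Bb; rewrite /gq u1 !mulr1 -/P -/Q.
set al := dotv a u; set be := dotv b u => Ca Cb Aa Bb.
have N : 0 <= be ^+ 2 * P + al ^+ 2 * Q + 2 * al * be * X - 4 * al ^+ 2 * be ^+ 2.
  have := sqnorm_ge0 (be *: a + al *: b - (2 * al * be) *: u).
  rewrite /sqnorm !dotvDl !dotvDr !dotvNl !dotvNr !dotvZl !dotvZr.
  rewrite -/(sqnorm a) -/(sqnorm b) -/(sqnorm u) u1 -/P -/Q (dotvC b a) -/X.
  rewrite (dotvC u a) (dotvC u b) -/al -/be.
  by move=> H; apply: (le_trans H); rewrite le_eqVlt; apply/orP; left; apply/eqP; ring.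
case: (leP 1 (r ^+ 2)) => r1.
  by rewrite ge_min r1.
rewrite ge_min; apply/orP; right.
rewrite ler_pdivrMr //.
set A := P - al ^+ 2; set B := Q - be ^+ 2.
have ED : D = 2 * (al ^+ 2 * B + be ^+ 2 * A) + A * B
   - (be ^+ 2 * P + al ^+ 2 * Q + 2 * al * be * X - 4 * al ^+ 2 * be ^+ 2) - (X - al * be) ^+ 2.
  by rewrite /D /A /B; ring.
have h1 : al ^+ 2 * B <= P * r ^+ 2.
  apply: ler_pM; rewrite ?sqr_ge0 // /A; lra.
have h2 : be ^+ 2 * A <= Q * r ^+ 2.
  apply: ler_pM; rewrite ?sqr_ge0 // /B; lra.
have h3 : A * B <= r ^+ 2.
  have : A * B <= r ^+ 2 * r ^+ 2 by apply: ler_pM.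
  have r20 := sqr_ge0 r; move: r1 r20; set r2 := r ^+ 2 => r1 r20 H.
  have : r2 * r2 <= r2 by nra.
  lra.
have h4 := sqr_ge0 (X - al * be).
rewrite ED; lra.
Qed.

End Main2.

Section Main3.
Context {R : realType} {n : nat}.
Implicit Types (x y z u : 'rV[R]_n) (K : set 'rV[R]_n).

Lemma cyl_Cen K : (2 <= n)%N -> bounded_eucl K -> ~ in_line K -> K = cyl K -> Cen K.
Proof.
move=> n2 [M HM] HnL HK.
have n0 : (0 < n)%N by apply: leq_trans n2.
have closedK : closed K by rewrite HK; exact: cyl_closed.
split; [split; [|split]|split].
- apply: subclosed_compact closedK
    (rV_compact (fun i => @segment_compact R (- (M + 1)) (M + 1))) _.
  move=> x Kx i; rewrite /= in_itv /=.
  have h := coord_le_sqnorm x i; have h2 := HM x Kx.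
  apply/andP; split; nra.
- move=> x y t Kx Ky t01; rewrite HK => u r u1 r0 Ku.
  have Cx := Ku x Kx; have Cy := Ku y Ky.
  rewrite /cylinder /= sinbr_le ?(ltW r0) // in Cx.
  rewrite /cylinder /= sinbr_le ?(ltW r0) // in Cy.
  rewrite /cylinder /= sinbr_le ?(ltW r0) //.
  exact: (gq_convex _ _ _ _ _ u1 Cx Cy t01).
- have [m m0 Hm] := cyl_lower K n0 HnL.
  exists 0; rewrite /interior /=; apply/nbhs_ballP.
  have nR : 0 < (n%:R : R) by rewrite ltr0n.
  exists (Num.min 1 (m / n%:R)); first by rewrite /= lt_min ltr01 /= divr_gt0.
  move=> y /ball0_coord Hy; rewrite HK => u r u1 r0 Ku.
  rewrite /cylinder /= sinbr_le ?(ltW r0) //.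
  apply: le_trans (gq_le u y u1) _; apply: le_trans (Hm u r u1 r0 Ku).
  have -> : m = \sum_(i < n) (m / n%:R).
    by rewrite sumr_const card_ord -(mulr_natr (m / n%:R)) divfK ?lt0r_neq0.
  apply: ler_sum => i _.
  have := Hy i; rewrite lt_min => /andP[h1 h2].
  have hn := normr_ge0 (y ord0 i).
  rewrite -expr2 -real_normK ?num_real //.
  set w := `|y ord0 i| in h1 h2 hn *; set q := m / n%:R in h2 *.
  nra.
- move=> x Kx; rewrite HK => u r u1 r0 Ku.
  have Cx := Ku x Kx.
  by rewrite /cylinder /= sinbr_le ?(ltW r0) // gqN -sinbr_le ?(ltW r0).
- exists [set C | exists u (r : R), sqnorm u = 1 /\ 0 < r /\ K `<=` cylinder u r /\ C = cylinder u r].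
  split.
    by move=> C [u [r [u1 [r0 [_ ->]]]]]; exists u, r.
  apply/seteqP; split.
    by move=> x Kx C [u [r [_ [_ [Ku ->]]]]]; exact: Ku.
  move=> x Hx; rewrite HK => u r u1 r0 Ku.
  by apply: Hx; exists u, r.
Qed.

End Main3.

Theorem proposition3p5 (R : realType) (n : nat) (K : set 'rV[R]_n) :
  (2 <= n)%N -> bounded_eucl K -> ~ in_line K ->
  (Cen K <-> K = cyl K) /\ sine_polar (sine_polar K) = cyl K.
Proof.
move=> n2 Hb HnL; split; last exact: polar2.
split; last exact: cyl_Cen.
move=> [_ [_ [F [HF KF]]]].
apply/seteqP; split.
  by move=> x Kx u r u1 r0 Ku; exact: Ku.
move=> x Hx; rewrite KF => C FC.
have [u [r [u1 [r0 EC]]]] := HF C FC.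
rewrite EC; apply: Hx => // y Ky.
by move: Ky; rewrite KF => /(_ C FC); rewrite EC.
Qed.
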